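(* If $(T,d_T)$ is an $\mathbb{R}$-tree (possibly non-separable), then $\Delta_T^{(c)}(R)\leq 2R$ for all $R\in[0,\infty)$. Consequently, for every $\varepsilon>0$, every $\mathbb{R}$-tree $(4+\varepsilon)$-Lipschitz embeds into $c_0^+(\kappa)$ for some cardinal $\kappa$.
   Context: A metric space $(T,d_T)$ is an $\mathbb{R}$-tree if (i) for any $s,t\in T$ there is a unique isometric embedding $\phi_{s,t}\colon[0,d_T(s,t)]\to T$ with $\phi_{s,t}(0)=s$ and $\phi_{s,t}(d_T(s,t))=t$; and (ii) any injective continuous map $\varphi\colon[0,1]\to T$ has the same range as $\phi_{\varphi(0),\varphi(1)}$. For a cover $\mathcal{U}$ of $T$: $\mathrm{diam}(\mathcal{U})=\sup_{U\in\mathcal{U}}\mathrm{diam}(U)$; $\mathcal{L}(\mathcal{U})=\sup\{d\in[0,\infty): \text{every } E\subseteq T \text{ with } \mathrm{diam}(E)<d \text{ is contained in some } U\in\mathcal{U}\}$; point-finite means each point lies in only finitely many members. $\Delta_T^{(c)}(R)=\inf\{\mathrm{diam}(\mathcal{U}): \mathcal{U} \text{ point-finite cover of } T,\ \mathcal{L}(\mathcal{U})\geq R\}$. For a cardinal $\kappa$, $c_0^+(\kappa)$ is the set of nonnegative real families $(x_\xi)_{\xi<\kappa}$ with $\{\xi: x_\xi>\eta\}$ finite for every $\eta>0$, with the sup metric. A $K$-Lipschitz embedding is an injective $f$ with $\mathrm{Lip}(f)\mathrm{Lip}(f^{-1})\leq K$. *)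

(* Defs.v *)
From Stdlib Require Import Reals List.
From Coquelicot Require Import Coquelicot.
Open Scope R_scope.

Section Defs.
Context {T : Type} (d : T -> T -> R).

Definition is_metric : Prop :=
  (forall x y, 0 <= d x y) /\
  (forall x y, d x y = 0 <-> x = y) /\
  (forall x y, d x y = d y x) /\
  (forall x y z, d x z <= d x y + d y z).

Definition geodesic (s t : T) (phi : R -> T) : Prop :=
  phi 0 = s /\ phi (d s t) = t /\
  (forall u v, 0 <= u <= d s t -> 0 <= v <= d s t ->
     d (phi u) (phi v) = Rabs (u - v)).

Definition continuous_on01 (phi : R -> T) : Prop :=
  forall u, 0 <= u <= 1 -> forall e, 0 < e -> exists del, 0 < del /\
    forall v, 0 <= v <= 1 -> Rabs (v - u) < del -> d (phi v) (phi u) < e.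

Definition injective_on01 (phi : R -> T) : Prop :=
  forall u v, 0 <= u <= 1 -> 0 <= v <= 1 -> phi u = phi v -> u = v.

Definition is_R_tree : Prop :=
  (forall s t, exists phi, geodesic s t phi /\
     forall psi, geodesic s t psi -> forall u, 0 <= u <= d s t -> psi u = phi u) /\
  (forall phi : R -> T, continuous_on01 phi -> injective_on01 phi ->
     forall psi, geodesic (phi 0) (phi 1) psi ->
     forall x, (exists u, 0 <= u <= 1 /\ phi u = x) <->
               (exists u, 0 <= u <= d (phi 0) (phi 1) /\ psi u = x)).

(* diameter of a set (diam of the empty set is 0) *)
Definition diam (E : T -> Prop) : Rbar :=
  Lub_Rbar (fun r => r = 0 \/ exists x y, E x /\ E y /\ r = d x y).

Definition is_cover (U : (T -> Prop) -> Prop) : Prop :=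
  forall x, exists A, U A /\ A x.

Definition point_finite (U : (T -> Prop) -> Prop) : Prop :=
  forall x, exists l : list (T -> Prop), forall A, U A -> A x -> In A l.

Definition cover_diam (U : (T -> Prop) -> Prop) : Rbar :=
  Rbar_lub (fun r => exists A, U A /\ r = diam A).

Definition lebesgue (U : (T -> Prop) -> Prop) : Rbar :=
  Lub_Rbar (fun r => 0 <= r /\
    forall E : T -> Prop, Rbar_lt (diam E) (Finite r) ->
      exists A, U A /\ forall x, E x -> A x).

Definition Delta_c (Rr : R) : Rbar :=
  Rbar_glb (fun r => exists U, is_cover U /\ point_finite U /\
              Rbar_le (Finite Rr) (lebesgue U) /\ r = cover_diam U).
End Defs.

Definition in_c0plus {K : Type} (x : K -> R) : Prop :=
  (forall k, 0 <= x k) /\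
  (forall eta, 0 < eta -> exists l : list K, forall k, x k > eta -> In k l).

Definition c0dist {K : Type} (x y : K -> R) : R :=
  real (Lub_Rbar (fun r => exists k, r = Rabs (x k - y k))).

(* Main.v *)
Require Import Defs.
From Stdlib Require Import Reals List Lra Lia ClassicalEpsilon Classical.
From Coquelicot Require Import Coquelicot.
Open Scope R_scope.

Definition fin {A : Type} (P : A -> Prop) := exists l : list A, forall a, P a -> In a l.

Lemma fin_subsing {A} (P : A -> Prop) : (forall a b, P a -> P b -> a = b) -> fin P.
Proof.
  intros H. destruct (classic (exists a, P a)) as [[a Ha]|Hn].
  - exists (a :: nil). intros b Hb. left. apply H; auto.
  - exists nil. intros b Hb. exfalso; apply Hn; eauto.
Qed.

Lemma fin_sub {A} (P Q : A -> Prop) : (forall a, P a -> Q a) -> fin Q -> fin P.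
Proof. intros H [l Hl]. exists l. auto. Qed.

Lemma fin_or {A} (P Q : A -> Prop) : fin P -> fin Q -> fin (fun a => P a \/ Q a).
Proof.
  intros [l1 H1] [l2 H2]. exists (l1 ++ l2). intros a [Ha|Ha]; apply in_or_app; auto.
Qed.

Lemma fin_union {A} (P : nat -> A -> Prop) N : (forall i, (i <= N)%nat -> fin (P i)) ->
  fin (fun a => exists i, (i <= N)%nat /\ P i a).
Proof.
  induction N as [|N IH]; intros H.
  - destruct (H 0%nat (le_n 0)) as [l Hl]. exists l. intros a [i [Hi Pa]].
    assert (i = 0%nat) by lia. subst. auto.
  - destruct IH as [l1 H1]. { intros i Hi. apply H. lia. }
    destruct (H (S N) (le_n _)) as [l2 H2]. exists (l1 ++ l2).
    intros a [i [Hi Pa]]. apply in_or_app.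
    destruct (Nat.eq_dec i (S N)) as [->|ne]. right; auto.
    left. apply H1. exists i. split; auto. lia.
Qed.

Lemma glb_le (P : Rbar -> Prop) x : P x -> Rbar_le (Rbar_glb P) x.
Proof. intros Hx. unfold Rbar_glb. destruct (proj2_sig (Rbar_ex_glb P)) as [Hl _]. apply Hl; auto. Qed.

Lemma lub_le (P : Rbar -> Prop) b : (forall x, P x -> Rbar_le x b) -> Rbar_le (Rbar_lub P) b.
Proof. intros Hb. unfold Rbar_lub. destruct (proj2_sig (Rbar_ex_lub P)) as [_ Hl]. apply Hl; auto. Qed.

Definition scale (n : Z) := exp (IZR n * ln 2).
Lemma ln2_pos : 0 < ln 2.
Proof. pose proof ln_lt_2. lra. Qed.
Lemma scale_pos n : 0 < scale n.
Proof. apply exp_pos. Qed.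
Lemma exp_le a b : a <= b -> exp a <= exp b.
Proof. intros [H | H]. left; apply exp_increasing; auto. rewrite H; lra. Qed.
Lemma scale_ex s : 0 < s -> exists n, scale n <= s <= 2 * scale n.
Proof.
  intros Hs. pose proof ln2_pos as l2.
  set (r := ln s / ln 2). destruct (archimed r) as [H1 H2].
  exists (up r - 1)%Z. unfold scale. rewrite minus_IZR. simpl (IZR 1).
  assert (E : exp (r * ln 2) = s).
  { unfold r. replace (ln s / ln 2 * ln 2) with (ln s) by (field; lra). apply exp_ln; auto. }
  split.
  - rewrite <- E. apply exp_le. apply Rmult_le_compat_r; lra.
  - rewrite <- E. 
    replace (2 * exp ((IZR (up r) - 1) * ln 2)) with (exp (ln 2 + (IZR (up r) - 1) * ln 2))
      by (rewrite exp_plus, exp_ln; lra).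
    apply exp_le. nra.
Qed.

Lemma c0_ub {K : Type} (x y : K -> R) B : 0 <= B -> (forall k, Rabs (x k - y k) <= B) ->
  c0dist x y <= B.
Proof.
  intros HB H. unfold c0dist.
  pose proof (Lub_Rbar_correct (fun r => exists k, r = Rabs (x k - y k))) as [ub lst].
  assert (Rbar_le (Lub_Rbar (fun r => exists k, r = Rabs (x k - y k))) (Finite B)).
  { apply lst. intros r [k ->]. simpl. auto. }
  destruct (Lub_Rbar (fun r => exists k, r = Rabs (x k - y k))); simpl in *; auto; contradiction.
Qed.

Lemma c0_lb {K : Type} (x y : K -> R) B : (forall k, Rabs (x k - y k) <= B) ->
  forall k, Rabs (x k - y k) <= c0dist x y.
Proof.
  intros H k. unfold c0dist.
  pose proof (Lub_Rbar_correct (fun r => exists k, r = Rabs (x k - y k))) as [ub lst].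
  assert (Rbar_le (Lub_Rbar (fun r => exists k, r = Rabs (x k - y k))) (Finite B)).
  { apply lst. intros r [k' ->]. simpl. auto. }
  assert (Rbar_le (Finite (Rabs (x k - y k))) (Lub_Rbar (fun r => exists k, r = Rabs (x k - y k)))).
  { apply ub. eauto. }
  destruct (Lub_Rbar (fun r => exists k, r = Rabs (x k - y k))); simpl in *; auto; contradiction.
Qed.

Section Tree.
Context {T : Type} (d : T -> T -> R) (Hm : is_metric d) (Ht : is_R_tree d).

Lemma d_nonneg x y : 0 <= d x y. Proof. apply Hm. Qed.
Lemma d_refl x : d x x = 0. Proof. apply Hm; auto. Qed.
Lemma d_eq x y : d x y = 0 -> x = y. Proof. apply Hm. Qed.
Lemma d_sym x y : d x y = d y x. Proof. apply Hm. Qed.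
Lemma d_tri x y z : d x z <= d x y + d y z. Proof. apply Hm. Qed.

Lemma geo_ex x y : exists phi, geodesic d x y phi.
Proof. destruct (proj1 Ht x y) as [phi [H _]]; eauto. Qed.

Lemma geo_uniq x y phi psi : geodesic d x y phi -> geodesic d x y psi ->
  forall u, 0 <= u <= d x y -> phi u = psi u.
Proof.
  intros H1 H2 u Hu. destruct (proj1 Ht x y) as [phi0 [_ H]].
  rewrite (H _ H1 u Hu), (H _ H2 u Hu). reflexivity.
Qed.

Variable o : T.
Definition h x := d o x.
Definition gam x : R -> T := proj1_sig (constructive_indefinite_description _ (geo_ex o x)).
Lemma gam_geo x : geodesic d o x (gam x).
Proof. unfold gam. apply proj2_sig. Qed.

Lemma gam0 x : gam x 0 = o. Proof. apply gam_geo. Qed.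
Lemma gamh x : gam x (h x) = x. Proof. apply gam_geo. Qed.
Lemma h_nonneg x : 0 <= h x. Proof. apply d_nonneg. Qed.
Lemma gam_iso x u v : 0 <= u <= h x -> 0 <= v <= h x ->
  d (gam x u) (gam x v) = Rabs (u - v).
Proof. intros; apply gam_geo; auto. Qed.
Lemma h_gam x t : 0 <= t <= h x -> h (gam x t) = t.
Proof.
  intros Ht0. unfold h. rewrite <- (gam0 x) at 1. rewrite gam_iso; try (unfold h in *; lra).
  rewrite Rabs_left1; lra.
Qed.
Lemma d_gam_end x t : 0 <= t <= h x -> d (gam x t) x = h x - t.
Proof.
  intros Ht0. rewrite <- (gamh x) at 2. rewrite gam_iso; try (pose proof (h_nonneg x); lra).
  rewrite Rabs_left1; lra.
Qed.

Lemma agree_down x y s t : 0 <= t <= s -> s <= h x -> s <= h y ->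
  gam x s = gam y s -> gam x t = gam y t.
Proof.
  intros Hts Hx Hy E.
  set (q := gam x s).
  assert (Hq : d o q = s). { pose proof (h_gam x s) as H. unfold h in *. apply H; lra. }
  assert (G1 : geodesic d o q (gam x)).
  { split; [apply gam0|split].
    - rewrite Hq; reflexivity.
    - intros u v Hu Hv; rewrite Hq in Hu, Hv; apply gam_iso; lra. }
  assert (G2 : geodesic d o q (gam y)).
  { split; [apply gam0|split].
    - rewrite Hq; unfold q; rewrite E; reflexivity.
    - intros u v Hu Hv; rewrite Hq in Hu, Hv; apply gam_iso; lra. }
  apply (geo_uniq o q); auto. lra.
Qed.

Definition Sag x y t := 0 <= t /\ t <= h x /\ t <= h y /\ gam x t = gam y t.

Lemma Sag_bound x y : bound (Sag x y).
Proof. exists (h x). intros t [_ [H _]]; exact H. Qed.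
Lemma Sag_ne x y : exists t, Sag x y t.
Proof. exists 0. repeat split; try apply h_nonneg; try lra. rewrite !gam0; auto. Qed.

Definition beta x y := proj1_sig (completeness _ (Sag_bound x y) (Sag_ne x y)).
Lemma beta_lub x y : is_lub (Sag x y) (beta x y).
Proof. unfold beta. apply proj2_sig. Qed.


Lemma Sag0 x y : Sag x y 0.
Proof. repeat split; try apply h_nonneg; try lra. rewrite !gam0; auto. Qed.

Lemma beta_props x y : 0 <= beta x y /\ beta x y <= h x /\ beta x y <= h y.
Proof.
  destruct (beta_lub x y) as [U L].
  repeat split.
  - apply U. apply Sag0.
  - apply L. intros t [_ [H _]]; exact H.
  - apply L. intros t [_ [_ [H _]]]; exact H.
Qed.

Lemma Sag_le x y t : Sag x y t -> t <= beta x y.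
Proof. intros H. apply (beta_lub x y). exact H. Qed.

Lemma beta_in x y : gam x (beta x y) = gam y (beta x y).
Proof.
  destruct (beta_props x y) as [B0 [B1 B2]].
  set (b := beta x y) in *.
  apply NNPP. intro Hne.
  set (e := d (gam x b) (gam y b)).
  assert (He : 0 < e).
  { destruct (d_nonneg (gam x b) (gam y b)) as [H|H]; [exact H|].
    exfalso; apply Hne; apply d_eq; auto. }
  assert (Hex : exists t, Sag x y t /\ b - e/2 < t).
  { apply NNPP; intro Hn.
    assert (b <= b - e/2); [|lra].
    apply (beta_lub x y). intros t Ht1.
    destruct (Rle_dec t (b - e/2)) as [r|r]; [exact r|].
    exfalso; apply Hn; exists t; split; [exact Ht1|lra]. }
  destruct Hex as [t [[T0 [T1 [T2 T3]]] Htt]].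
  assert (t <= b) by (apply Sag_le; repeat split; auto).
  assert (e <= d (gam x b) (gam x t) + d (gam y t) (gam y b)).
  { unfold e. eapply Rle_trans; [apply d_tri with (y := gam x t)|].
    rewrite T3. eapply Rle_trans; [apply Rplus_le_compat_l; apply d_tri with (y := gam y t)|].
    rewrite d_refl. lra. }
  rewrite !gam_iso in H0; try lra.
  rewrite (Rabs_right (b - t)), (Rabs_left1 (t - b)) in H0 by lra; lra.
Qed.

Lemma key x y : d x y = h x + h y - 2 * beta x y.
Proof.
  destruct (beta_props x y) as [B0 [B1 B2]].
  pose proof (beta_in x y) as Bi.
  set (b := beta x y) in *.
  set (c := gam x b).
  assert (Dxc : d x c = h x - b). { unfold c. rewrite d_sym. apply d_gam_end. lra. }
  assert (Dcy : d c y = h y - b). { unfold c. rewrite Bi. apply d_gam_end. lra. }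
  apply Rle_antisym.
  { pose proof (d_tri x c y). lra. }
  set (a := h x - b). set (e := h y - b). set (L := a + e).
  destruct (Req_dec L 0) as [L0|L0].
  { pose proof (d_nonneg x y). unfold L, a, e in L0. lra. }
  assert (Lp : 0 < L) by (unfold L, a, e in *; lra).
  set (P := fun u => if Rle_dec u a then gam x (h x - u) else gam y (b + u - a)).
  assert (Plip : forall u v, 0 <= u <= L -> 0 <= v <= L -> d (P u) (P v) <= Rabs (u - v)).
  { assert (cross : forall u v, 0 <= u <= a -> a < v <= L ->
              d (gam x (h x - u)) (gam y (b + v - a)) <= Rabs (u - v)).
    { intros u v Hu Hv.
      eapply Rle_trans; [apply d_tri with (y := c)|].
      unfold c at 2. rewrite Bi.
      unfold c. rewrite !gam_iso; unfold L, a, e in *; try lra.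
      rewrite (Rabs_right (h x - u - b)) by lra.
      rewrite (Rabs_left1 (b - (b + v - (h x - b)))) by lra.
      rewrite Rabs_left1; lra. }
    intros u v Hu Hv. unfold P.
    destruct (Rle_dec u a); destruct (Rle_dec v a).
    - rewrite gam_iso; unfold L, a, e in *; try lra.
      replace (h x - u - (h x - v)) with (-(u - v)) by ring. rewrite Rabs_Ropp; lra.
    - apply cross; lra.
    - rewrite d_sym, Rabs_minus_sym. apply cross; lra.
    - rewrite gam_iso; unfold L, a, e in *; try lra.
      replace (b + u - (h x - b) - (b + v - (h x - b))) with (u - v) by ring. lra. }
  assert (Pinj : forall u v, 0 <= u <= L -> 0 <= v <= L -> P u = P v -> u = v).
  { assert (cross : forall u v, 0 <= u <= a -> a < v <= L ->
              gam x (h x - u) <> gam y (b + v - a)).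
    { intros u v Hu Hv E.
      assert (E2 : h (gam x (h x - u)) = h (gam y (b + v - a))) by (rewrite E; auto).
      rewrite !h_gam in E2; unfold L, a, e in *; try lra.
      assert (h x - u <= b).
      { apply Sag_le. repeat split; try lra. rewrite E. f_equal. lra. }
      lra. }
    intros u v Hu Hv E. unfold P in E.
    destruct (Rle_dec u a); destruct (Rle_dec v a).
    - assert (d (gam x (h x - u)) (gam x (h x - v)) = 0) by (rewrite E; apply d_refl).
      rewrite gam_iso in H; unfold L, a, e in *; try lra.
      apply Rabs_eq_0 in H. lra.
    - exfalso; apply (cross u v); auto; lra.
    - exfalso; apply (cross v u); auto; lra.
    - assert (d (gam y (b + u - a)) (gam y (b + v - a)) = 0) by (rewrite E; apply d_refl).
      rewrite gam_iso in H; unfold L, a, e in *; try lra.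
      apply Rabs_eq_0 in H. lra. }
  set (phi := fun s => P (s * L)).
  assert (P0 : P 0 = x).
  { unfold P. destruct (Rle_dec 0 a); [|unfold a in *; lra].
    rewrite Rminus_0_r. apply gamh. }
  assert (PL : P L = y).
  { unfold P. destruct (Rle_dec L a).
    - replace (h x - L) with b by (unfold L, a, e in *; lra). rewrite Bi.
      replace b with (h y) by (unfold L, a, e in *; lra). apply gamh.
    - replace (b + L - a) with (h y) by (unfold L, a, e in *; lra). apply gamh. }
  assert (phi0 : phi 0 = x) by (unfold phi; rewrite Rmult_0_l; auto).
  assert (phi1 : phi 1 = y) by (unfold phi; rewrite Rmult_1_l; auto).
  assert (Hc : continuous_on01 d phi).
  { intros u Hu eps Heps. exists (eps / L). split.
    { apply Rdiv_lt_0_compat; lra. }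
    intros v Hv Hvu. unfold phi.
    eapply Rle_lt_trans; [apply Plip; split; nra|].
    replace (v * L - u * L) with ((v - u) * L) by ring.
    rewrite Rabs_mult, (Rabs_right L) by lra.
    apply Rmult_lt_reg_r with (/ L). apply Rinv_0_lt_compat; lra.
    replace (Rabs (v - u) * L * / L) with (Rabs (v - u)) by (field; lra).
    exact Hvu. }
  assert (Hi : injective_on01 phi).
  { intros u v Hu Hv E. unfold phi in E. apply Pinj in E; try (split; nra).
    apply Rmult_eq_reg_r with L; lra. }
  destruct (geo_ex (phi 0) (phi 1)) as [psi Hpsi].
  destruct (proj2 Ht phi Hc Hi psi Hpsi c) as [Hc1 _].
  destruct Hc1 as [u [Hu Hpu]].
  { exists (a / L). split.
    - split. apply Rdiv_le_0_compat; unfold a in *; lra.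
      apply Rmult_le_reg_r with L; auto. unfold Rdiv. rewrite Rmult_assoc, Rinv_l by lra.
      unfold L, e in *; lra.
    - unfold phi. replace (a / L * L) with a by (field; lra).
      unfold P. destruct (Rle_dec a a); [|lra]. unfold c, a. f_equal; ring. }
  rewrite phi0, phi1 in Hu, Hpsi.
  destruct Hpsi as [Q0 [Q1 Q2]].
  assert (E1 : d x c = u).
  { rewrite <- Q0, <- Hpu. rewrite Q2; try lra. rewrite Rabs_left1; lra. }
  assert (E2 : d c y = d x y - u).
  { pose proof (d_nonneg x y).
    transitivity (d (psi u) (psi (d x y))). rewrite Hpu, Q1; reflexivity.
    rewrite Q2 by lra. rewrite Rabs_left1; lra. }
  lra.
Qed.

Definition gp x y := (h x + h y - d x y) / 2.

Lemma gp_beta x y : gp x y = beta x y.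
Proof. unfold gp. rewrite key. field. Qed.

Lemma gp_sym x y : gp x y = gp y x.
Proof. unfold gp. rewrite d_sym. field. Qed.

Lemma gp_ultra x y z : Rmin (gp x y) (gp y z) <= gp x z.
Proof.
  rewrite !gp_beta.
  destruct (beta_props x y) as [A0 [A1 A2]].
  destruct (beta_props y z) as [B0 [B1 B2]].
  set (m := Rmin (beta x y) (beta y z)).
  assert (m <= beta x y) by apply Rmin_l.
  assert (m <= beta y z) by apply Rmin_r.
  assert (0 <= m) by (unfold m; apply Rmin_glb; lra).
  apply Sag_le. repeat split; try lra.
  transitivity (gam y m).
  - apply agree_down with (beta x y); try lra. apply beta_in.
  - apply agree_down with (beta y z); try lra. apply beta_in.
Qed.

Lemma gp_le_h x y : gp x y <= h x.
Proof. unfold gp, h. pose proof (d_tri o x y). lra. Qed.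
Lemma gp_le_h2 x y : gp x y <= h y.
Proof. rewrite gp_sym. apply gp_le_h. Qed.
Lemma gp_nonneg x y : 0 <= gp x y.
Proof. unfold gp, h. pose proof (d_tri x o y). rewrite (d_sym x o) in H. lra. Qed.
Lemma gp_self x : gp x x = h x.
Proof. unfold gp. rewrite d_refl. field. Qed.
Lemma d_gp x y : d x y = h x + h y - 2 * gp x y.
Proof. unfold gp. field. Qed.

Definition desc p x := gp p x = h p.

Lemma desc_d p x : desc p x -> d p x = h x - h p.
Proof. unfold desc. rewrite d_gp. intros ->. ring. Qed.

Lemma point x t : 0 <= t <= h x -> exists p, h p = t /\ desc p x.
Proof.
  intros Hx. exists (gam x t). split. apply h_gam; auto.
  unfold desc, gp. rewrite d_gam_end by auto. rewrite h_gam by auto. field.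
Qed.

Lemma ultra_ge x y z t : t <= gp x y -> t <= gp y z -> t <= gp x z.
Proof.
  intros H1 H2. eapply Rle_trans; [|apply (gp_ultra x y z)].
  apply Rmin_glb; auto.
Qed.

Lemma desc_unique p q x : desc p x -> desc q x -> h p = h q -> p = q.
Proof.
  unfold desc. intros Hp Hq E. apply d_eq.
  assert (h p <= gp p q).
  { apply ultra_ge with x. lra. rewrite gp_sym. lra. }
  pose proof (gp_le_h p q). rewrite d_gp. pose proof (d_nonneg p q). rewrite d_gp in H1. lra.
Qed.

Lemma desc_not p x y : desc p x -> ~ desc p y -> d p x <= d x y.
Proof.
  intros Hp Hn. unfold desc in *.
  assert (gp p y < h p).
  { pose proof (gp_le_h p y). destruct (Rle_lt_or_eq_dec _ _ H); auto. contradiction. }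
  assert (gp x y < h p).
  { destruct (Rlt_le_dec (gp x y) (h p)) as [r|r]; auto.
    exfalso. assert (h p <= gp p y) by (apply ultra_ge with x; lra). lra. }
  rewrite desc_d by auto. rewrite d_gp. pose proof (gp_le_h2 x y). lra.
Qed.

Lemma floor_ex x g : 0 <= x -> 0 < g -> exists k : nat, INR k * g <= x < INR k * g + g.
Proof.
  intros Hx Hg. destruct (nfloor_ex (x / g)) as [k Hk].
  { apply Rdiv_le_0_compat; lra. }
  exists k. destruct Hk as [H1 H2].
  assert (x / g * g = x) by (field; lra).
  split; nra.
Qed.

Lemma diam_lt (E : T -> Prop) Rr x y : Rbar_lt (diam d E) (Finite Rr) -> E x -> E y -> d x y < Rr.
Proof.
  intros HE Ex Ey.
  assert (Rbar_le (Finite (d x y)) (diam d E)).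
  { unfold diam. apply (Lub_Rbar_correct _). right. exists x, y. auto. }
  exact (Rbar_le_lt_trans _ _ _ H HE).
Qed.

Section Part1.
Variables (Rr g : R) (HR : 0 <= Rr) (Hg : 0 < g).
Definition Cg q := fun x => desc q x /\ h x < h q + Rr + 2 * g.
Definition Ug := fun A => exists q (k : nat), h q = INR k * g /\ A = Cg q.

Lemma Ug_cover : is_cover Ug.
Proof.
  intros x. destruct (floor_ex (h x) g (h_nonneg x) Hg) as [k Hk].
  destruct (point x (INR k * g)) as [q [Hq1 Hq2]].
  { split; [|lra]. pose proof (pos_INR k). nra. }
  exists (Cg q). split. exists q, k; auto.
  split; auto. lra.
Qed.

Lemma Ug_pf : point_finite Ug.
Proof.
  intros x. destruct (floor_ex (h x) g (h_nonneg x) Hg) as [M HM].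
  assert (F : fin (fun A => exists i, (i <= M)%nat /\
              (fun i A => exists q, h q = INR i * g /\ desc q x /\ A = Cg q) i A)).
  { apply fin_union. intros i _. apply fin_subsing.
    intros A B [q [Hq1 [Hq2 ->]]] [q' [Hq1' [Hq2' ->]]].
    f_equal. apply desc_unique with x; auto. lra. }
  destruct F as [l Hl]. exists l. intros A [q [k [Hk ->]]] [Hd Hh].
  apply Hl. exists k. split.
  - assert (INR k * g <= h x) by (pose proof (gp_le_h2 q x); unfold desc in Hd; lra).
    assert (INR k < INR M + 1).
    { apply Rmult_lt_reg_r with g; auto. lra. }
    rewrite <- S_INR in H0. apply INR_lt in H0. lia.
  - exists q. auto.
Qed.

Lemma Ug_leb : Rbar_le (Finite Rr) (lebesgue d Ug).
Proof.
  unfold lebesgue. apply (Lub_Rbar_correct _). split; auto.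
  intros E HE.
  destruct (classic (exists e0, E e0)) as [[e0 He0]|Hne].
  2:{ exists (Cg o). split.
      - exists o, 0%nat. split; auto. unfold h. rewrite d_refl. simpl. ring.
      - intros x Ex. exfalso. apply Hne. eauto. }
  set (NS := fun r => exists x, E x /\ r = - gp x e0).
  assert (Hb : bound NS).
  { exists 0. intros r [x [_ ->]]. pose proof (gp_nonneg x e0). lra. }
  assert (Hn : exists r, NS r) by (exists (- gp e0 e0); exists e0; auto).
  destruct (completeness NS Hb Hn) as [M [Mub Mlst]].
  set (mu := - M).
  assert (H1 : forall x, E x -> mu <= gp x e0).
  { intros x Ex. assert (- gp x e0 <= M) by (apply Mub; exists x; auto). unfold mu; lra. }
  assert (H0 : 0 <= mu).
  { assert (M <= 0); [|unfold mu; lra]. apply Mlst. intros r [x [_ ->]].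
    pose proof (gp_nonneg x e0). lra. }
  assert (H2 : mu <= h e0) by (rewrite <- gp_self; auto).
  assert (Happ : exists y, E y /\ gp y e0 < mu + g).
  { apply NNPP. intro Hn2.
    assert (M <= M - g); [|lra]. apply Mlst. intros r [x [Ex ->]].
    destruct (Rlt_le_dec (gp x e0) (mu + g)) as [r|r].
    - exfalso; apply Hn2; eauto.
    - unfold mu in r; lra. }
  destruct Happ as [y [Ey Hy]].
  destruct (floor_ex mu g H0 Hg) as [k Hk].
  destruct (point e0 (INR k * g)) as [q [Hq1 Hq2]].
  { split; [|lra]. pose proof (pos_INR k). nra. }
  exists (Cg q). split. exists q, k; auto.
  intros x Ex. split.
  - unfold desc. apply Rle_antisym. apply gp_le_h.
    apply ultra_ge with e0. unfold desc in Hq2; lra.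
    rewrite gp_sym. pose proof (H1 x Ex). lra.
  - pose proof (diam_lt E Rr x y HE Ex Ey) as Dxy.
    pose proof (diam_lt E Rr x e0 HE Ex He0) as Dxe.
    destruct (Rlt_le_dec (gp x e0) (mu + g)) as [r|r].
    + pose proof (d_gp x e0). pose proof (gp_le_h2 x e0). lra.
    + assert (gp x y <= gp y e0).
      { pose proof (gp_ultra y x e0). rewrite (gp_sym y x) in H.
        unfold Rmin in H. destruct (Rle_dec (gp x y) (gp x e0)); lra. }
      pose proof (d_gp x y). pose proof (gp_le_h2 x y). lra.
Qed.

Lemma Ug_diam : Rbar_le (cover_diam d Ug) (Finite (2 * Rr + 4 * g)).
Proof.
  unfold cover_diam. apply lub_le. intros r [A [[q [k [Hk ->]]] ->]].
  unfold diam. apply (Lub_Rbar_correct _). intros r [->|[x [y [[Dx Hx] [[Dy Hy] ->]]]]].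
  - simpl. lra.
  - simpl. unfold desc in *. assert (h q <= gp x y).
    { apply ultra_ge with q. rewrite gp_sym; lra. lra. }
    rewrite d_gp. lra.
Qed.

Lemma part1_g : Rbar_le (Delta_c d Rr) (Finite (2 * Rr + 4 * g)).
Proof.
  eapply Rbar_le_trans; [|apply Ug_diam].
  unfold Delta_c. apply glb_le. exists Ug. split. apply Ug_cover. split. apply Ug_pf.
  split; auto. apply Ug_leb.
Qed.
End Part1.

Section Part2.
Variables (C : R) (HC : 0 < C).

Definition Qc n p := exists k : nat, (1 <= k)%nat /\ h p = INR k * scale n.
Definition coord n p x :=
  if excluded_middle_informative (Qc n p /\ desc p x) then Rmin (d p x) (C * scale n) else 0.
Definition fe x (k : option (Z * T)) : R :=
  match k with None => h x | Some (n, p) => coord n p x end.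

Lemma fe_nonneg x k : 0 <= fe x k.
Proof.
  destruct k as [[n p]|]; simpl. 2: apply h_nonneg.
  unfold coord. destruct excluded_middle_informative; [|lra].
  apply Rmin_glb. apply d_nonneg. pose proof (scale_pos n). nra.
Qed.

Lemma fe_lip x y k : Rabs (fe x k - fe y k) <= d x y.
Proof.
  destruct k as [[n p]|]; simpl.
  2:{ unfold h. apply Rabs_le. pose proof (d_tri o x y). pose proof (d_tri o y x).
      rewrite (d_sym y x) in H0. lra. }
  unfold coord.
  destruct excluded_middle_informative as [[Q1 D1]|N1];
  destruct excluded_middle_informative as [[Q2 D2]|N2].
  - apply Rabs_le. pose proof (d_tri p x y). pose proof (d_tri p y x). rewrite (d_sym y x) in H0.
    unfold Rmin. destruct Rle_dec; destruct Rle_dec; lra.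
  - assert (~ desc p y) by tauto. pose proof (desc_not p x y D1 H).
    rewrite Rminus_0_r. rewrite Rabs_right.
    2: { apply Rle_ge, Rmin_glb. apply d_nonneg. pose proof (scale_pos n). nra. }
    eapply Rle_trans; [apply Rmin_l|]. auto.
  - assert (~ desc p x) by tauto. pose proof (desc_not p y x D2 H).
    rewrite Rminus_0_l, Rabs_Ropp. rewrite Rabs_right.
    2: { apply Rle_ge, Rmin_glb. apply d_nonneg. pose proof (scale_pos n). nra. }
    eapply Rle_trans; [apply Rmin_l|]. rewrite (d_sym x y); auto.
  - rewrite Rminus_0_r, Rabs_R0. apply d_nonneg.
Qed.

Lemma fe_lower x y : h y <= h x -> exists k, d x y <= (4 * (C + 1) / C) * Rabs (fe x k - fe y k).
Proof.
  intros Hxy.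
  set (b := gp x y). set (A := h x - b).
  pose proof (gp_le_h2 x y). pose proof (gp_nonneg x y). pose proof (d_gp x y).
  fold b in H, H0, H1.
  assert (L2p : 0 < 4 * (C + 1) / C) by (apply Rdiv_lt_0_compat; lra).
  destruct (Rle_dec A 0) as [A0|A0].
  { exists None. pose proof (Rabs_pos (fe x None - fe y None)). unfold A in A0. nra. }
  set (s := A / (C + 1)).
  assert (sp : 0 < s) by (apply Rdiv_lt_0_compat; lra).
  assert (sA : s <= A).
  { unfold s. apply Rmult_le_reg_r with (C + 1). lra.
    unfold Rdiv. rewrite Rmult_assoc, Rinv_l by lra. nra. }
  destruct (scale_ex s sp) as [n [Hn1 Hn2]].
  pose proof (scale_pos n) as dp. set (del := scale n) in *.
  destruct (floor_ex b del H0 dp) as [m Hm'].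
  set (t := INR (S m) * del).
  assert (Ht1 : b < t /\ t <= b + del) by (unfold t; rewrite S_INR; lra).
  destruct (point x t) as [p [Hp1 Hp2]].
  { unfold A in *. lra. }
  assert (Np : ~ desc p y).
  { intros Dy. unfold desc in Dy, Hp2.
    assert (t <= gp x y). { apply ultra_ge with p. rewrite gp_sym. lra. lra. }
    fold b in H2. lra. }
  exists (Some (n, p)). simpl. unfold coord.
  destruct excluded_middle_informative as [_|N1].
  2: { exfalso. apply N1. split; auto. exists (S m). split. lia. auto. }
  destruct excluded_middle_informative as [[_ Dy]|_].
  { contradiction. }
  pose proof (desc_d p x Hp2) as Dpx.
  set (m0 := A * C / (2 * (C + 1))).
  assert (E1 : 4 * (C + 1) / C * m0 = 2 * A) by (unfold m0; field; lra).
  assert (E2 : s = A / (C + 1)) by reflexivity.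
  assert (M1 : m0 <= d p x).
  { rewrite Dpx. assert (A - s = A * C / (C + 1)) by (rewrite E2; field; lra).
    assert (m0 <= A * C / (C + 1)).
    { unfold m0. unfold Rdiv. rewrite Rinv_mult.
      assert (0 <= A * C * / (C + 1)).
      { apply Rmult_le_pos. nra. left; apply Rinv_0_lt_compat; lra. }
      replace (A * C * (/ 2 * / (C + 1))) with (/2 * (A * C * / (C + 1))) by ring. lra. }
    unfold A in *. lra. }
  assert (M2 : m0 <= C * del).
  { assert (m0 = C * s / 2) by (unfold m0; rewrite E2; field; lra). nra. }
  assert (Mm : m0 <= Rmin (d p x) (C * del)) by (apply Rmin_glb; auto).
  rewrite Rminus_0_r, Rabs_right.
  2: { apply Rle_ge. pose proof (Rmin_glb _ _ _ (d_nonneg p x) (Rlt_le _ _ (Rmult_lt_0_compat _ _ HC dp))). exact H2. }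
  assert (4 * (C + 1) / C * m0 <= 4 * (C + 1) / C * Rmin (d p x) (C * del)).
  { apply Rmult_le_compat_l; lra. }
  unfold A, del in *. lra.
Qed.

Lemma fe_c0 x eta : 0 < eta -> exists l, forall k, fe x k > eta -> In k l.
Proof.
  intros He.
  set (r0 := ln (eta / C) / ln 2). set (N0 := up r0).
  set (r1 := ln (h x) / ln 2). set (N1 := up r1).
  set (I := Z.to_nat (N1 - N0)).
  destruct (nfloor_ex (h x * C / eta)) as [Mk HMk].
  { apply Rdiv_le_0_compat; try lra. pose proof (h_nonneg x). nra. }
  assert (F : fin (fun k => k = None \/ exists i, (i <= I)%nat /\
     (fun i k => exists j, (j <= Mk)%nat /\
        (fun j k => exists p, k = Some (N0 + Z.of_nat i, p)%Z /\ desc p x /\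
            h p = INR j * scale (N0 + Z.of_nat i)) j k) i k)).
  { apply fin_or. apply fin_subsing. intros a b -> ->; auto.
    apply fin_union. intros i _. apply fin_union. intros j _. apply fin_subsing.
    intros a b [p [-> [Dp Hp]]] [q [-> [Dq Hq]]]. f_equal. f_equal.
    apply desc_unique with x; auto. lra. }
  destruct F as [l Hl]. exists l. intros k Hk. apply Hl.
  destruct k as [[n p]|]; [right|left; auto].
  simpl in Hk. unfold coord in Hk.
  destruct excluded_middle_informative as [[[kk [Hkk Hpk]] Dp]|_]; [|lra].
  pose proof (scale_pos n) as sp.
  assert (G1 : eta < d p x) by (eapply Rlt_le_trans; [apply Hk|apply Rmin_l]).
  assert (G2 : eta < C * scale n) by (eapply Rlt_le_trans; [apply Hk|apply Rmin_r]).
  pose proof (desc_d p x Dp) as Dpx.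
  assert (Hkk1 : 1 <= INR kk) by (apply (le_INR 1); auto).
  assert (G3 : scale n < h x) by nra.
  assert (G4 : eta / C < scale n).
  { apply Rmult_lt_reg_r with C; auto. unfold Rdiv. rewrite Rmult_assoc, Rinv_l by lra. lra. }
  pose proof ln2_pos as l2.
  assert (Hn0 : (N0 <= n)%Z).
  { assert (r0 < IZR n).
    { unfold r0. apply Rmult_lt_reg_r with (ln 2); auto.
      replace (ln (eta / C) / ln 2 * ln 2) with (ln (eta / C)) by (field; lra).
      unfold scale in G4. rewrite <- (ln_exp (IZR n * ln 2)).
      apply ln_increasing; auto. apply Rdiv_lt_0_compat; lra. }
    destruct (archimed r0). fold N0 in H0, H1.
    assert (N0 - 1 < n)%Z. { apply lt_IZR. rewrite minus_IZR. lra. }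
    lia. }
  assert (Hn1 : (n < N1)%Z).
  { assert (IZR n < r1).
    { unfold r1. apply Rmult_lt_reg_r with (ln 2); auto.
      replace (ln (h x) / ln 2 * ln 2) with (ln (h x)) by (field; lra).
      unfold scale in G3. rewrite <- (ln_exp (IZR n * ln 2)).
      apply ln_increasing; auto. }
    destruct (archimed r1). fold N1 in H0. apply lt_IZR. lra. }
  exists (Z.to_nat (n - N0)). split. unfold I. lia.
  exists kk. split.
  - assert (INR kk < INR (S Mk)).
    { rewrite S_INR.
      assert (INR kk * (eta / C) < h x).
      { eapply Rle_lt_trans with (INR kk * scale n). apply Rmult_le_compat_l. lra. lra.
        pose proof (d_nonneg p x). lra. }
      assert (INR kk < h x * C / eta).
      { apply Rmult_lt_reg_r with (eta / C). apply Rdiv_lt_0_compat; lra.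
        replace (h x * C / eta * (eta / C)) with (h x) by (field; lra). lra. }
      lra. }
    apply INR_lt in H. lia.
  - exists p. replace (N0 + Z.of_nat (Z.to_nat (n - N0)))%Z with n by lia.
    split; auto.
Qed.

End Part2.

End Tree.

Theorem proposition4p4 (T : Type) (d : T -> T -> R) :
  is_metric d -> is_R_tree d ->
  (forall Rr : R, 0 <= Rr -> Rbar_le (Delta_c d Rr) (Finite (2 * Rr))) /\
  (forall eps : R, 0 < eps ->
     exists (K : Type) (f : T -> (K -> R)),
       (forall t, in_c0plus (f t)) /\
       (forall s t, f s = f t -> s = t) /\
       exists L1 L2 : R, 0 <= L1 /\ 0 <= L2 /\ L1 * L2 <= 4 + eps /\
         (forall s t, c0dist (f s) (f t) <= L1 * d s t) /\
         (forall s t, d s t <= L2 * c0dist (f s) (f t))).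
Proof.
  intros Hm Ht.
  destruct (classic (inhabited T)) as [[o]|Hn].
  - split.
    + intros Rr HR.
      assert (H := fun g Hg => part1_g d Hm Ht o Rr g HR Hg).
      destruct (Delta_c d Rr) as [v| |]; simpl in *; auto.
      * apply Rnot_lt_le. intro Hv.
        assert (Hg : 0 < (v - 2 * Rr) / 8) by lra.
        specialize (H _ Hg). lra.
      * apply (H 1). lra.
    + intros eps He.
      set (C := 4 / eps).
      assert (HC : 0 < C) by (apply Rdiv_lt_0_compat; lra).
      set (L2 := 4 * (C + 1) / C).
      assert (L2p : 0 < L2) by (apply Rdiv_lt_0_compat; lra).
      assert (Low : forall s t, d s t <= L2 * c0dist (fe d o C s) (fe d o C t)).
      { assert (W : forall s t, h d o t <= h d o s ->
                 d s t <= L2 * c0dist (fe d o C s) (fe d o C t)).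
        { intros s t Hst. destruct (fe_lower d Hm Ht o C HC s t Hst) as [k Hk].
          eapply Rle_trans; [exact Hk|]. apply Rmult_le_compat_l; [lra|].
          apply c0_lb with (d s t). intros k'. apply fe_lip; auto. }
        intros s t. destruct (Rle_dec (h d o t) (h d o s)) as [r|r].
        - apply W; auto.
        - rewrite (proj1 (proj2 (proj2 Hm)) s t).
          replace (c0dist (fe d o C s) (fe d o C t)) with (c0dist (fe d o C t) (fe d o C s)).
          apply W; lra.
          unfold c0dist. f_equal. apply Lub_Rbar_eqset. intros r0.
          split; intros [k ->]; exists k; apply Rabs_minus_sym. }
      exists (option (Z * T)), (fe d o C). split; [|split].
      * intros t. split. intros k. apply (fe_nonneg d Hm o C HC).
        intros eta Heta. apply (fe_c0 d Hm Ht o C HC t eta Heta).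
      * intros s t E. apply (d_eq d Hm).
        pose proof (Low s t). rewrite E in H.
        assert (c0dist (fe d o C t) (fe d o C t) <= 0).
        { apply c0_ub. lra. intros k. rewrite Rminus_diag, Rabs_R0. lra. }
        pose proof (d_nonneg d Hm s t). nra.
      * exists 1, L2. split; [lra|split; [lra|split; [|split]]].
        -- unfold L2, C. apply Req_le. field. lra.
        -- intros s t. rewrite Rmult_1_l. apply c0_ub. apply (d_nonneg d Hm).
           intros k. apply fe_lip; auto.
        -- exact Low.
  - assert (E : forall x : T, False) by (intros x; apply Hn; constructor; exact x).
    split.
    + intros Rr HR.
      eapply Rbar_le_trans with (cover_diam d (fun A => A = (fun _ : T => False))).
      * unfold Delta_c. apply glb_le. exists (fun A => A = (fun _ : T => False)).
        split; [intros x; destruct (E x)|split; [intros x; destruct (E x)|split; auto]].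
        unfold lebesgue. apply (Lub_Rbar_correct _). split; auto.
        intros F _. exists (fun _ => False). split; [reflexivity|intros x; destruct (E x)].
      * unfold cover_diam. apply lub_le. intros r [A [-> ->]].
        unfold diam. apply (Lub_Rbar_correct _). intros r [->|[x _]].
        simpl. lra. destruct (E x).
    + intros eps He. exists unit, (fun _ _ => 0). split; [|split].
      * intros t; destruct (E t).
      * intros s; destruct (E s).
      * exists 0, 0. split; [lra|split; [lra|split; [lra|split]]];
        intros s; destruct (E s).
Qed.
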